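(* Let $n,g$ be integers with $0\leq g\leq \left\lfloor \frac{n-3}{2}\right\rfloor$, and let $G$ be a connected graph of order $n$ which has a $g$-good-neighbor cut. Then $$1\leq \kappa^g(G)\leq n-2g-2.$$ Moreover, the upper and lower bounds are sharp (each is attained with equality by some such graph).
   Context: Let $G=(V,E)$ be a connected graph and $g\ge 0$ an integer. A set $F\subseteq V$ is a $g$-good-neighbor faulty set if $|N(v)\cap (V-F)|\geq g$ for every vertex $v\in V-F$ (equivalently, every component of $G-F$ has minimum degree at least $g$). A $g$-good-neighbor cut of $G$ is a $g$-good-neighbor faulty set $F$ such that $G-F$ is disconnected. The $g$-good-neighbor connectivity $\kappa^g(G)$ is the minimum cardinality of a $g$-good-neighbor cut of $G$; it is defined only when $G$ has at least one $g$-good-neighbor cut. *)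

(* Defs.v *)
(* Simple graphs on a finType T given by a symmetric,
   irreflexive edge relation e : rel T. *)
From mathcomp Require Import all_boot.
Set Implicit Arguments. Unset Strict Implicit. Unset Printing Implicit Defensive.

Section GoodNeighbor.
Variables (T : finType) (e : rel T).

Definition simple_graph := symmetric e /\ irreflexive e.

Definition graph_connected := forall x y : T, connect e x y.

Definition del_rel (F : {set T}) : rel T :=
  fun a b => [&& e a b, a \notin F & b \notin F].

Definition nbhd_out (F : {set T}) (v : T) : {set T} :=
  [set u | e v u & u \notin F].

Definition good_faulty (g : nat) (F : {set T}) : bool :=
  [forall v, (v \notin F) ==> (g <= #|nbhd_out F v|)].

Definition disconnected_after (F : {set T}) : bool :=
  [exists x, exists y, [&& x \notin F, y \notin F & ~~ connect (del_rel F) x y]].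

Definition good_cut (g : nat) (F : {set T}) : bool :=
  good_faulty g F && disconnected_after F.

(* kappa^g(G): minimum cardinality of a g-good-neighbor cut
   (meaningful only when such a cut exists). *)
Definition kappa_g (g : nat) : nat :=
  \big[minn/#|T|]_(F : {set T} | good_cut g F) #|F|.

End GoodNeighbor.

(* Main.v *)
Require Import Defs.
From mathcomp Require Import all_boot zify.
Set Implicit Arguments. Unset Strict Implicit. Unset Printing Implicit Defensive.

Lemma closed_conn (T : finType) (r : rel T) (a : pred T) :
  (forall u v, r u v -> a u -> a v) -> forall x y, connect r x y -> a x -> a y.
Proof.
move=> cl x y /connectP[p pth ->]; elim: p x pth => //= z p IH x /andP[rxz pth] xa.
exact: IH pth (cl _ _ rxz xa).
Qed.

Section Gen.
Variables (T : finType) (e : rel T).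

Lemma kappa_ge k g : k <= #|T| -> (forall F, good_cut e g F -> k <= #|F|) ->
  k <= kappa_g e g.
Proof.
move=> hT hF; rewrite /kappa_g; apply: (big_ind (fun m => k <= m)) => //.
by move=> m1 m2 h1 h2; rewrite leq_min h1 h2.
Qed.

Lemma kappa_le g F : good_cut e g F -> kappa_g e g <= #|F|.
Proof.
move=> h; rewrite /kappa_g.
have: F \in index_enum {set T} by rewrite mem_index_enum.
elim: (index_enum _) => [//|a s IH]; rewrite inE big_cons => /orP[/eqP<-|Fs].
  by rewrite h geq_minl.
case: ifP => _; last exact: IH.
by apply: leq_trans (geq_minr _ _) (IH Fs).
Qed.

Lemma cut_bound g F : simple_graph e -> good_cut e g F -> #|F| + g.*2 + 2 <= #|T|.
Proof.
case=> esym eirr /andP[/forallP gf /existsP[x /existsP[y /and3P[xF yF nxy]]]].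
set r := del_rel e F.
have rsym : symmetric r.
  move=> u v; rewrite /r /del_rel esym.
  by case: (u \in F); case: (v \in F); rewrite ?andbF.
have csym := sym_connect_sym rsym.
pose C z := [set w | connect r z w].
have CF z : z \notin F -> C z \subset ~: F.
  move=> zF; apply/subsetP => w; rewrite !inE => czw.
  apply: (closed_conn (a := [pred w | w \notin F])) czw zF.
  by move=> u v /and3P[].
have Cbig z : z \notin F -> g.+1 <= #|C z|.
  move=> zF.
  have: z |: nbhd_out e F z \subset C z.
    apply/subsetP => w; rewrite !inE => /orP[/eqP->|/andP[ezw wF]].
      exact: connect0.
    by apply: connect1; rewrite /r /del_rel ezw zF wF.
  move/subset_leq_card; apply: leq_trans.
  rewrite cardsU1 !inE eirr /= add1n ltnS.
  by have := gf z; rewrite zF.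
have disj : C x :&: C y = set0.
  apply/setP => w; rewrite !inE; apply/negbTE/negP => /andP[cxw cyw].
  apply: (negP nxy); apply: connect_trans cxw _; by rewrite csym.
have hU : C x :|: C y \subset ~: F by rewrite subUset CF // CF.
have := subset_leq_card hU; rewrite cardsU disj cards0 subn0.
have := cardsC F; have := Cbig x xF; have := Cbig y yF.
lia.
Qed.

Lemma part1 g n : #|T| = n -> simple_graph e -> graph_connected e ->
  (exists F, good_cut e g F) -> 1 <= kappa_g e g <= n - g.*2 - 2.
Proof.
move=> hn sg con [F0 hF0]; apply/andP; split; last first.
  apply: leq_trans (kappa_le hF0) _; have := cut_bound sg hF0; lia.
apply: kappa_ge; first by have := cut_bound sg hF0; lia.
move=> F /andP[_ /existsP[x /existsP[y /and3P[xF yF nxy]]]].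
rewrite card_gt0; apply/negP => /eqP Fe; subst F.
move: nxy; rewrite (@eq_connect _ _ e) ?con //.
by move=> u v; rewrite /del_rel !inE andbT.
Qed.

End Gen.

Lemma card_int m a k : a + k <= m.+1 -> k <= #|[set u : 'I_m.+1 | a <= u < a + k]|.
Proof.
move=> hak.
pose f := fun i : 'I_k => (inord (a + i) : 'I_m.+1).
have finj : injective f.
  move=> i j /(congr1 val) /=; have hi := ltn_ord i; have hj := ltn_ord j.
  rewrite /f !inordK; try lia.
  by move=> h; apply: val_inj; rewrite /= -(addnK a i) -(addnK a j) addnC h addnC.
have hc := card_imset [set: 'I_k] finj; rewrite cardsT card_ord in hc; rewrite -{1}hc.
apply: subset_leq_card; apply/subsetP => u /imsetP[i _ ->]; have hi := ltn_ord i.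
rewrite inE /f inordK; lia.
Qed.

Lemma hub_conn (T : finType) (e : rel T) h : symmetric e ->
  (forall z, z != h -> e z h) -> graph_connected e.
Proof.
move=> es hz.
have cx z : connect e z h.
  by case: (eqVneq z h) => [->|zh]; [exact: connect0| exact/connect1/hz].
move=> x y; apply: connect_trans (cx x) _; by rewrite sym_connect_sym.
Qed.

Lemma ord_neq m (u v : 'I_m) : (u != v) = (nat_of_ord u != nat_of_ord v).
Proof. by rewrite val_eqE. Qed.

Section Ex2.
Variables (m g : nat).
Hypothesis hm : g.*2 + 3 <= m.+1.

Definition e2 (i j : 'I_m.+1) : bool :=
  (i != j) && [|| nat_of_ord i == 0, nat_of_ord j == 0 | (nat_of_ord i <= g.+1) == (nat_of_ord j <= g.+1)].

Lemma e2_simple : simple_graph e2.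
Proof.
split; first by move=> i j; rewrite /e2 !ord_neq; lia.
by move=> i; rewrite /e2 eqxx.
Qed.

Lemma e2_conn : graph_connected e2.
Proof.
apply: (hub_conn (h := ord0)); first by case: e2_simple.
by move=> z; rewrite /e2 !ord_neq /= => ->; rewrite orbT.
Qed.

Lemma e2_cut : good_cut e2 g [set ord0].
Proof.
apply/andP; split.
  apply/forallP => v; apply/implyP; rewrite inE ord_neq /= => v0.
  have vn := ltn_ord v.
  case: (leqP (nat_of_ord v) g.+1) => hv.
    have sub : [set u : 'I_m.+1 | 1 <= u < 1 + g.+1] :\ v \subset nbhd_out e2 [set ord0] v.
      apply/subsetP => u; rewrite !inE /e2 !ord_neq /=; lia.
    have := subset_leq_card sub; have := cardsD1 v [set u : 'I_m.+1 | 1 <= u < 1 + g.+1].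
    have := card_int (m := m) (a := 1) (k := g.+1); case: (v \in _) => /=; lia.
  have sub : [set u : 'I_m.+1 | g.+2 <= u < g.+2 + (m.+1 - g.+2)] :\ v \subset nbhd_out e2 [set ord0] v.
    apply/subsetP => u; rewrite !inE /e2 !ord_neq /=; lia.
  have := subset_leq_card sub; have := cardsD1 v [set u : 'I_m.+1 | g.+2 <= u < g.+2 + (m.+1 - g.+2)].
  have := card_int (m := m) (a := g.+2) (k := m.+1 - g.+2); case: (v \in _) => /=; lia.
apply/existsP; exists (inord 1); apply/existsP; exists (inord m).
rewrite !inE !ord_neq /= !inordK; try lia.
apply/and3P; split; try lia.
apply/negP => c.
have cl : forall u v : 'I_m.+1, del_rel e2 [set ord0] u v ->
    (0 < nat_of_ord u <= g.+1) -> (0 < nat_of_ord v <= g.+1).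
  move=> u v; rewrite /del_rel /e2 !inE !ord_neq /=; lia.
have := closed_conn (a := [pred z : 'I_m.+1 | 0 < nat_of_ord z <= g.+1]) cl c.
rewrite /= !inordK; lia.
Qed.

Lemma e2_kappa : kappa_g e2 g = 1.
Proof.
apply/eqP; rewrite eqn_leq; apply/andP; split.
  by have := kappa_le e2_cut; rewrite cards1.
have := part1 (card_ord m.+1) e2_simple e2_conn (ex_intro _ [set ord0] e2_cut).
by case/andP.
Qed.

End Ex2.

Section Ex3.
Variables (m g : nat).
Hypothesis hm : g.*2 + 3 <= m.+1.

Definition e3 (i j : 'I_m.+1) : bool :=
  (i != j) && ~~ [|| (nat_of_ord i < g.+1) && (g.+1 <= nat_of_ord j < g.*2.+2)
                   | (nat_of_ord j < g.+1) && (g.+1 <= nat_of_ord i < g.*2.+2)].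

Lemma e3_simple : simple_graph e3.
Proof.
split; first by move=> i j; rewrite /e3 !ord_neq; lia.
by move=> i; rewrite /e3 eqxx.
Qed.

Lemma e3_conn : graph_connected e3.
Proof.
apply: (hub_conn (h := inord g.*2.+2)); first by case: e3_simple.
move=> z; rewrite /e3 !ord_neq /= inordK; lia.
Qed.

Lemma e3_cut : good_cut e3 g [set u : 'I_m.+1 | g.*2.+2 <= u].
Proof.
apply/andP; split.
  apply/forallP => v; apply/implyP; rewrite inE => v0.
  have vn := ltn_ord v.
  case: (leqP g.+1 (nat_of_ord v)) => hv.
    have sub : [set u : 'I_m.+1 | g.+1 <= u < g.+1 + g.+1] :\ v \subset nbhd_out e3 [set u : 'I_m.+1 | g.*2.+2 <= u] v.
      apply/subsetP => u; rewrite !inE /e3 !ord_neq /=; lia.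
    have := subset_leq_card sub; have := cardsD1 v [set u : 'I_m.+1 | g.+1 <= u < g.+1 + g.+1].
    have := card_int (m := m) (a := g.+1) (k := g.+1); case: (v \in _) => /=; lia.
  have sub : [set u : 'I_m.+1 | 0 <= u < 0 + g.+1] :\ v \subset nbhd_out e3 [set u : 'I_m.+1 | g.*2.+2 <= u] v.
    apply/subsetP => u; rewrite !inE /e3 !ord_neq /=; lia.
  have := subset_leq_card sub; have := cardsD1 v [set u : 'I_m.+1 | 0 <= u < 0 + g.+1].
  have := card_int (m := m) (a := 0) (k := g.+1); case: (v \in _) => /=; lia.
apply/existsP; exists (inord 0); apply/existsP; exists (inord g.+1).
rewrite !inE /= !inordK; try lia.
apply/and3P; split; try lia.
apply/negP => c.
have cl : forall u v : 'I_m.+1, del_rel e3 [set u : 'I_m.+1 | g.*2.+2 <= u] u v ->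
    (nat_of_ord u < g.+1) -> (nat_of_ord v < g.+1).
  move=> u v; rewrite /del_rel /e3 !inE !ord_neq /=; lia.
have := closed_conn (a := [pred z : 'I_m.+1 | nat_of_ord z < g.+1]) cl c.
rewrite /= !inordK; lia.
Qed.

Lemma e3_lower F : good_cut e3 g F -> m.+1 - g.*2 - 2 <= #|F|.
Proof.
case/andP=> _ /existsP[x /existsP[y /and3P[xF yF nxy]]].
have sub : [set u : 'I_m.+1 | g.*2.+2 <= u < g.*2.+2 + (m.+1 - g.*2.+2)] \subset F.
  apply/subsetP => w; rewrite inE => hw; apply/negPn/negP => wF.
  have cw z : z \notin F -> connect (del_rel e3 F) z w.
    move=> zF; case: (eqVneq z w) => [->|zw]; first exact: connect0.
    apply: connect1; rewrite /del_rel zF wF /e3 zw /=.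
    move: zw; rewrite ord_neq; lia.
  have rsym : symmetric (del_rel e3 F).
    move=> u v; rewrite /del_rel (proj1 e3_simple).
    by case: (u \in F); case: (v \in F); rewrite ?andbF.
  apply: (negP nxy); apply: connect_trans (cw x xF) _.
  by rewrite (sym_connect_sym rsym) cw.
have := subset_leq_card sub.
have := card_int (m := m) (a := g.*2.+2) (k := m.+1 - g.*2.+2); lia.
Qed.

Lemma e3_kappa : kappa_g e3 g = m.+1 - g.*2 - 2.
Proof.
apply/eqP; rewrite eqn_leq; apply/andP; split.
  have := part1 (card_ord m.+1) e3_simple e3_conn (ex_intro _ [set u : 'I_m.+1 | g.*2.+2 <= u] e3_cut).
  by case/andP.
apply: kappa_ge; first by rewrite card_ord; lia.
exact: e3_lower.
Qed.

End Ex3.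

Theorem corollary2p1 (n g : nat) :
  3 <= n -> g <= (n - 3)./2 ->
  (forall (T : finType) (e : rel T),
      #|T| = n -> simple_graph e -> graph_connected e ->
      (exists F : {set T}, good_cut e g F) ->
      1 <= kappa_g e g <= n - g.*2 - 2)
  /\ (exists e : rel 'I_n,
        [/\ simple_graph e, graph_connected e,
            (exists F : {set 'I_n}, good_cut e g F) & kappa_g e g = 1])
  /\ (exists e : rel 'I_n,
        [/\ simple_graph e, graph_connected e,
            (exists F : {set 'I_n}, good_cut e g F) & kappa_g e g = n - g.*2 - 2]).
Proof.
move=> h3 hg; split.
  by move=> T e hT sg con ex; apply: part1.
case: n h3 hg => [//|m] h3 hg.
have hm : g.*2 + 3 <= m.+1.
  have := half_leq (leqnn 0); move: hg; rewrite -(leq_double g) => hg'.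
  have := odd_double_half (m.+1 - 3); lia.
split.
  exists (@e2 m g); split; [exact: e2_simple | exact: e2_conn | | exact: e2_kappa].
  by exists [set ord0]; apply: e2_cut.
exists (@e3 m g); split; [exact: e3_simple | exact: e3_conn | | exact: e3_kappa].
by exists [set u : 'I_m.+1 | g.*2.+2 <= u]; apply: e3_cut.
Qed.
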